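(* Fix a toric poset $P=P(G,[\omega])$ and $i,j,k\in V$. Then $k\in[i,j]^{\mathrm{tor}}$ if and only if $k$ lies on a toric directed path $i\to_{\mathrm{tor}}j$ in $\bar\omega'$ for some $\bar\omega'\in[\bar\omega^{\mathrm{tor}}(P)]$.
   Context: Toric poset setup: $V=[n]$; $\mathrm{Acyc}(G)$ acyclic orientations; $[\omega]$ the class under the equivalence generated by converting a source into a sink (flips); toric chambers of the toric graphic arrangement $\mathcal{A}_{\mathrm{tor}}(G)$ (components of $\mathbb{R}^V/\mathbb{Z}^V$ minus the toric hyperplanes $H^{\mathrm{tor}}_{ij}=\{x_i\equiv x_j\bmod 1\}$, $\{i,j\}\in E$) correspond bijectively to classes $[\omega]$; $P(G,[\omega])$ is identified with its chamber $c(P)$. Toric transitive closure: $\bar G^{\mathrm{tor}}(P)$ is the graph on $V$ whose edges are those of $G$ together with all $\{i,j\}$ with $H^{\mathrm{tor}}_{ij}\cap c(P)=\emptyset$; $c(P)$ is also a chamber of $\mathcal{A}_{\mathrm{tor}}(\bar G^{\mathrm{tor}}(P))$, and $[\bar\omega^{\mathrm{tor}}(P)]$ is the corresponding class of acyclic orientations of $\bar G^{\mathrm{tor}}(P)$. A toric directed path $i_1\to_{\mathrm{tor}}i_m$ in an orientation is a directed path $i_1\to i_2\to\cdots\to i_m$ such that the edge $i_1\to i_m$ is also present (a single vertex and a single edge count as toric directed paths). Toric chain: $C=\{i_1,\dots,i_m\}$ is a toric chain of $P$ if there is a cyclic class $[(i_1,\dots,i_m)]$ such that for every $x\in c(P)$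 (coordinates in $[0,1)$) some cyclic shift $(j_1,\dots,j_m)$ has $0\le x_{j_1}<\dots<x_{j_m}<1$; write $P|_C=[(i_1,\dots,i_m)]$. Toric interval: $[i,i]^{\mathrm{tor}}=\{i\}$; for $i\ne j$, $[i,j]^{\mathrm{tor}}=\emptyset$ if $\{i,j\}$ is not a toric chain and otherwise $[i,j]^{\mathrm{tor}}=\{i,j\}\cup\{k: P|_{\{i,j,k\}}=[(i,k,j)]\}$. *)

(* Defs.v *)
From Stdlib Require Import Reals Relations.
From mathcomp Require Import all_boot.

Set Implicit Arguments.
Unset Strict Implicit.
Unset Printing Implicit Defensive.

Definition vrel (n : nat) := 'I_n -> 'I_n -> Prop.

Definition simple_graph n (G : vrel n) : Prop :=
  (forall i j, G i j -> G j i) /\ (forall i, ~ G i i).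

Definition is_orientation n (G o : vrel n) : Prop :=
  (forall i j, o i j -> G i j) /\
  (forall i j, G i j -> o i j \/ o j i) /\
  (forall i j, o i j -> ~ o j i).

Definition acyclic n (o : vrel n) : Prop :=
  forall i, ~ clos_trans 'I_n o i i.

Definition is_acyc n (G o : vrel n) : Prop := is_orientation G o /\ acyclic o.

Definition is_source n (G o : vrel n) (v : 'I_n) : Prop :=
  forall j, G v j -> o v j.

Definition flip_at n (o : vrel n) (v : 'I_n) : vrel n :=
  fun i j => if (i == v) || (j == v) then o j i else o i j.

Definition flip_step n (G : vrel n) (o o' : vrel n) : Prop :=
  exists v, is_source G o v /\ forall i j, o' i j <-> flip_at o v i j.

(* the equivalence generated by flips (relations are compared up to
   pointwise equivalence) ; [o] = {o' | tor_equiv G o o'} *)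
Definition tor_equiv n (G : vrel n) : relation (vrel n) :=
  clos_refl_sym_trans (vrel n)
    (fun a b => (forall i j, a i j <-> b i j) \/ flip_step G a b).

(* points of R^V ; representatives in the fundamental domain [0,1)^V *)
Definition point n := 'I_n -> R.

Definition in_fund n (x : point n) : Prop :=
  forall i, Rle 0 (x i) /\ Rlt (x i) 1.

Definition tor_hyp n (i j : 'I_n) (x : point n) : Prop :=
  exists z : Z, Rminus (x i) (x j) = IZR z.

Definition pt_orient n (G : vrel n) (x : point n) : vrel n :=
  fun i j => G i j /\ Rlt (x i) (x j).

(* x (taken in [0,1)^V) lies in the toric chamber c(G,[o]) of A_tor(G)
   corresponding to the class [o]  (Develin-Macauley-Reiner correspondence:
   the chamber of [o] is the set of points off the toric hyperplanes whose
   induced orientation lies in [o]). *)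
Definition chamber n (G o : vrel n) (x : point n) : Prop :=
  in_fund x /\ (forall i j, G i j -> ~ tor_hyp i j x) /\
  tor_equiv G (pt_orient G x) o.

Definition tor_closure n (G o : vrel n) : vrel n :=
  fun i j => G i j \/ (i <> j /\ forall x, chamber G o x -> ~ tor_hyp i j x).

(* o' \in [\bar omega^tor(P)] : the class of acyclic orientations of
   \bar G^tor(P) whose chamber in A_tor(\bar G^tor(P)) is c(P) *)
Definition in_closure_class n (G o o' : vrel n) : Prop :=
  is_acyc (tor_closure G o) o' /\
  exists x, chamber G o x /\ chamber (tor_closure G o) o' x.

Fixpoint dpath n (o : vrel n) (x : 'I_n) (p : seq 'I_n) : Prop :=
  match p with
  | [::] => True
  | y :: q => o x y /\ dpath o y q
  end.

Definition tor_dpath n (o : vrel n) (i j : 'I_n) (p : seq 'I_n) : Prop :=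
  match p with
  | [::] => False
  | a :: q => a = i /\ last a q = j /\ dpath o a q /\ (q <> [::] -> o i j)
  end.

Fixpoint incr_along n (x : point n) (s : seq 'I_n) : Prop :=
  match s with
  | [::] => True
  | a :: q => match q with
              | [::] => True
              | b :: _ => Rlt (x a) (x b) /\ incr_along x q
              end
  end.

(* P|_C = [(s)] : for every x in c(P) (coords in [0,1)), some cyclic shift
   (j_1,...,j_m) of s has 0 <= x_{j_1} < ... < x_{j_m} < 1 *)
Definition cyc_chain n (G o : vrel n) (s : seq 'I_n) : Prop :=
  forall x, chamber G o x -> exists k, (k < size s)%N /\ incr_along x (rot k s).

(* C (given as a duplicate-free list) is a toric chain of P *)
Definition is_tor_chain n (G o : vrel n) (C : seq 'I_n) : Prop :=
  exists s, perm_eq s C /\ cyc_chain G o s.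

Definition in_tor_interval n (G o : vrel n) (i j k : 'I_n) : Prop :=
  if i == j then k = i
  else is_tor_chain G o [:: i; j] /\
       (k = i \/ k = j \/ cyc_chain G o [:: i; k; j]).

(* Main.v *)
Require Import Defs.
From Stdlib Require Import Reals Lra Lia ZArith ClassicalEpsilon Classical Relations.
From mathcomp Require Import all_boot.
Set Implicit Arguments.
Unset Strict Implicit.
Local Open Scope R_scope.

Section S.
Variable n : nat.
Implicit Types (K o a b : vrel n) (u x y : point n).

Definition shiftZ u (m : 'I_n -> Z) : point n := fun v => u v + IZR (m v).

Definition realizes K o u : Prop :=
  (forall p q, K p q -> -1 < u p - u q < 1 /\ u p <> u q) /\
  (forall p q, o p q <-> K p q /\ u p < u q).

Lemma realizes_ext K o o' u u' : (forall v, u v = u' v) -> (forall p q, o p q <-> o' p q) ->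
  realizes K o u -> realizes K o' u'.
Proof.
move=> Hu Ho [H1 H2]; split.
- by move=> p q Kpq; rewrite -!Hu; apply: H1.
- by move=> p q; rewrite -!Hu -Ho; apply: H2.
Qed.

Lemma flip_gen K o u v (c : R) : simple_graph K -> realizes K o u ->
  (c = 1 \/ c = -1) ->
  (forall q, K v q -> (c = 1 -> u v < u q) /\ (c = -1 -> u q < u v)) ->
  realizes K (flip_at o v) (fun t => if t == v then u t + c else u t).
Proof.
move=> [Ks Kl] [H1 H2] Hc Hs.
have E: forall q, K v q -> -1 < u v - u q < 1 /\ (c = 1 -> u v < u q) /\ (c = -1 -> u q < u v).
  by move=> q Kq; have [] := H1 _ _ Kq; have := Hs q Kq; tauto.
split.
- move=> p q Kpq; case: (eqVneq p v) => [pv|pv]; case: (eqVneq q v) => [qv|qv].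
  + by subst; case: (Kl v).
  + subst; have := E q Kpq; case: Hc => ->; split; try lra; intro; lra.
  + subst; have := E p (Ks _ _ Kpq); case: Hc => ->; split; try lra; intro; lra.
  + exact: H1.
- move=> p q; rewrite /flip_at; case: (eqVneq p v) => [pv|pv]; case: (eqVneq q v) => [qv|qv] /=.
  + subst; split; [move/H2=> [/Kl []]|move=> [/Kl []]].
  + subst; rewrite H2; split.
    * move=> [Kqv Hl]; have := E q (Ks _ _ Kqv); split; first exact: Ks.
      case: Hc=> Hc; subst; lra.
    * move=> [Kvq Hl]; split; first exact: Ks.
      have := E q Kvq; case: Hc=> Hc; subst; lra.
  + subst; rewrite H2; split.
    * move=> [Kq Hl]; split; first exact: Ks. have := E p Kq; case: Hc=> Hc; subst; lra.
    * move=> [Kq Hl]; split; first exact: Ks.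
      have := E p (Ks _ _ Kq); case: Hc=> Hc; subst; lra.
  + exact: H2.
Qed.

Lemma realizes_diff K o u p q : realizes K o u -> K p q -> -1 < u p - u q < 1.
Proof. by move=> [H _] /H []. Qed.


Definition ev (v : 'I_n) (z : Z) : 'I_n -> Z := fun t => if t == v then z else 0%Z.

Lemma shiftZ_ev u v (c : Z) t : shiftZ u (ev v c) t = if t == v then u t + IZR c else u t.
Proof. by rewrite /shiftZ /ev; case: (t == v) => //; rewrite Rplus_0_r. Qed.

Lemma shiftZ0 u t : shiftZ u (fun _ => 0%Z) t = u t.
Proof. by rewrite /shiftZ Rplus_0_r. Qed.

Lemma shiftZ_comp u m m' t : shiftZ (shiftZ u m) m' t = shiftZ u (fun s => (m s + m' s)%Z) t.
Proof. by rewrite /shiftZ plus_IZR Rplus_assoc. Qed.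


Lemma step_real K a b u : simple_graph K -> flip_step K a b -> realizes K a u ->
  exists m, realizes K b (shiftZ u m).
Proof.
move=> sK [v [Hs Hb]] Ha; exists (ev v 1).
have Hs' : forall q, K v q -> (1 = 1 -> u v < u q) /\ (1 = -1 -> u q < u v).
  by move=> q /Hs /(proj2 Ha _ _) [_ ?]; split=> // ?; lra.
have := flip_gen sK Ha (or_introl erefl) Hs'.
apply: realizes_ext => [t|p q]; last by rewrite Hb.
by rewrite shiftZ_ev.
Qed.

Lemma step_real_back K a b u : simple_graph K -> flip_step K a b -> realizes K b u ->
  exists m, realizes K a (shiftZ u m).
Proof.
move=> sK [v [Hs Hb]] Ha; exists (ev v (-1)).
have Hs' : forall q, K v q -> (-1 = 1 -> u v < u q) /\ (-1 = -1 -> u q < u v).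
  move=> q Kq; have : b q v by rewrite Hb /flip_at eqxx orbT; exact: Hs.
  by move/(proj2 Ha _ _) => [_ ?]; split=> // ?; lra.
have := flip_gen sK Ha (or_intror erefl) Hs'.
apply: realizes_ext => [t|p q].
  by rewrite shiftZ_ev.
rewrite /flip_at; case E: (_ || _).
  by rewrite Hb /flip_at orbC E.
by rewrite Hb /flip_at E.
Qed.

Lemma chain K a b : simple_graph K -> tor_equiv K a b -> forall u,
  (realizes K a u -> exists m, realizes K b (shiftZ u m)) /\ (realizes K b u -> exists m, realizes K a (shiftZ u m)).
Proof.
move=> sK H; induction H as [a b [E|F]|a|a b _ IH|a b c _ IH1 _ IH2] => u.
- split.
  + move=> H; exists (fun _ => 0%Z); apply: realizes_ext H => // t; by rewrite shiftZ0.
  + move=> H; exists (fun _ => 0%Z); apply: realizes_ext H => // [t|p q]; first by rewrite shiftZ0.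
    by rewrite E.
- split=> Hr; [exact: (step_real sK F) | exact: (step_real_back sK F)].
- split=> H; exists (fun _ => 0%Z); apply: realizes_ext H => // t; by rewrite shiftZ0.
- by have [] := IH u.
- split.
  + move=> /(proj1 (IH1 u)) [m /(proj1 (IH2 _)) [m' H]].
    exists (fun s => (m s + m' s)%Z); apply: realizes_ext H => // t; by rewrite shiftZ_comp.
  + move=> /(proj2 (IH2 u)) [m /(proj2 (IH1 _)) [m' H]].
    exists (fun s => (m s + m' s)%Z); apply: realizes_ext H => // t; by rewrite shiftZ_comp.
Qed.

End S.

Section C.
Variable n : nat.
Implicit Types (K o : vrel n) (u x y : point n).
Local Open Scope R_scope.

Lemma lexmax_seq (T : eqType) (f : T -> Z) (g : T -> R) (d : T) (s : seq T) :
  exists v, forall t, t \in d :: s -> (f t < f v)%Z \/ (f t = f v /\ g t <= g v).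
Proof.
elim: s => [|a s [v Hv]].
  by exists d => b; rewrite inE => /eqP ->; right; split=> //; lra.
have split_in : forall b, b \in d :: a :: s -> b = a \/ b \in d :: s.
  move=> b; rewrite !inE => /or3P [/eqP->|/eqP->|->]; [right; by rewrite eqxx|by left|right; by rewrite orbT].
case: (Z.lt_total (f a) (f v)) => [h|[h|h]].
- exists v => b /split_in [->|/Hv] //; by left.
- case: (Rle_lt_dec (g a) (g v)) => h2.
  + exists v => b /split_in [->|/Hv] //; by right.
  + exists a => b /split_in [->|/Hv]; first by right; split=> //; lra.
    case=> [?|[? ?]]; [left; lia|right; split; [lia|lra]].
- exists a => b /split_in [->|/Hv]; first by right; split=> //; lra.
  case=> [?|[? ?]]; left; lia.
Qed.

Lemma lexmax (f : 'I_n -> Z) (g : 'I_n -> R) (d : 'I_n) :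
  exists v, forall b, (f b < f v)%Z \/ (f b = f v /\ g b <= g v).
Proof.
have [v Hv] := lexmax_seq f g d (enum 'I_n).
by exists v => b; apply: Hv; rewrite inE mem_enum orbT.
Qed.

Definition Nm (m : 'I_n -> Z) : nat := (\sum_(v < n) Z.abs_nat (m v))%N.
Definition upd (m : 'I_n -> Z) v z : 'I_n -> Z := fun t => if t == v then z else m t.

Lemma Nm_upd m v z : (Z.abs_nat z + 1 = Z.abs_nat (m v))%N -> (Nm (upd m v z) + 1 = Nm m)%N.
Proof.
move=> H; rewrite /Nm (bigD1 v) //= [in RHS](bigD1 v) //= /upd eqxx -H.
have -> : (\sum_(i < n | i != v) Z.abs_nat (if i == v then z else m i))%N =
  (\sum_(i < n | i != v) Z.abs_nat (m i))%N by apply: eq_bigr => t /negbTE ->.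
by rewrite addnAC.
Qed.

End C.

Section D.
Variable n : nat.
Implicit Types (K o : vrel n) (u x y : point n).
Local Open Scope R_scope.

Lemma comb_step K o o' u m : simple_graph K -> realizes K o u ->
  realizes K o' (shiftZ u m) ->
  (forall p q, o p q <-> o' p q) \/
  exists m' o'', (Nm m' + 1 = Nm m)%N /\ realizes K o'' (shiftZ u m') /\
     (tor_equiv K o o'' -> tor_equiv K o o').
Proof.
move=> sK Ho Ho'.
case: (classic (exists v, m v <> 0%Z)) => [[v0 Hv0]|Hall]; last first.
  left => p q; rewrite (proj2 Ho) (proj2 Ho') /shiftZ.
  have h1 : m p = 0%Z by apply: NNPP => h; apply: Hall; exists p.
  have h2 : m q = 0%Z by apply: NNPP => h; apply: Hall; exists q.
  by rewrite h1 h2 !Rplus_0_r.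
right.
have [v Hv] := lexmax m u v0.
have Hdu : forall q, K v q -> -1 < u v - u q < 1 /\ u v <> u q by move=> q /(proj1 Ho).
case: (Z_lt_le_dec 0 (m v)) => Hmv.
- exists (upd m v (m v - 1)), (flip_at o' v); split; [|split].
  + apply: Nm_upd; rewrite addn1; lia.
  + have Hs : forall q, K v q -> (-1 = 1 -> shiftZ u m v < shiftZ u m q) /\
                (-1 = -1 -> shiftZ u m q < shiftZ u m v).
      move=> q Kq; split=> [?|_]; first lra.
      have [d1 d2] := Hdu q Kq; rewrite /shiftZ.
      case: (Hv q) => [h|[h h']].
      * have : (m q <= m v - 1)%Z by lia.
        move/IZR_le; rewrite minus_IZR; lra.
      * rewrite h; lra.
    have := flip_gen sK Ho' (or_intror erefl) Hs.
    apply: realizes_ext => // t; rewrite /shiftZ /upd; case: eqP => [->|] //.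
    rewrite minus_IZR; lra.
  + move=> He; apply: rst_trans He _; apply: rst_step; right; exists v; split.
    * move=> q Kq; rewrite /flip_at eqxx /=; apply/(proj2 Ho'); split; first by case: sK => Ks _; apply: Ks.
      have [d1 d2] := Hdu q Kq; rewrite /shiftZ.
      case: (Hv q) => [h|[h h']].
      -- have : (m q <= m v - 1)%Z by lia.
         move/IZR_le; rewrite minus_IZR; lra.
      -- rewrite h; lra.
    * move=> p q; rewrite /flip_at; case E: (_ || _) => //; by rewrite orbC E.
- have Hle : forall t, (m t <= 0)%Z by move=> t; case: (Hv t) => [|[]]; lia.
  have [v' Hv'] := lexmax (fun t => - m t)%Z (fun t => - u t) v0.
  have Hmv' : (m v' < 0)%Z by have := Hle v0; case: (Hv' v0) => [|[]]; lia.
  have Hdu' : forall q, K v' q -> -1 < u v' - u q < 1 /\ u v' <> u q by move=> q /(proj1 Ho).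
  have Hsrc : forall q, K v' q -> shiftZ u m v' < shiftZ u m q.
    move=> q Kq; have [d1 d2] := Hdu' q Kq; rewrite /shiftZ.
    case: (Hv' q) => [h|[h h']].
    * have : (m v' + 1 <= m q)%Z by lia.
      move/IZR_le; rewrite plus_IZR; lra.
    * have -> : m q = m v' by lia.
      lra.
  exists (upd m v' (m v' + 1)), (flip_at o' v'); split; [|split].
  + apply: Nm_upd; rewrite addn1; lia.
  + have Hs : forall q, K v' q -> (1 = 1 -> shiftZ u m v' < shiftZ u m q) /\
                (1 = -1 -> shiftZ u m q < shiftZ u m v').
      by move=> q Kq; split=> [_|?]; [apply: Hsrc|lra].
    have := flip_gen sK Ho' (or_introl erefl) Hs.
    apply: realizes_ext => // t; rewrite /shiftZ /upd; case: eqP => [->|] //.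
    rewrite plus_IZR; lra.
  + move=> He; apply: rst_trans He _; apply: rst_sym; apply: rst_step; right; exists v'; split.
    * move=> q Kq; apply/(proj2 Ho'); split=> //; exact: Hsrc.
    * by [].
Qed.

Lemma comb K o o' u m : simple_graph K -> realizes K o u ->
  realizes K o' (shiftZ u m) -> tor_equiv K o o'.
Proof.
move=> sK Ho.
suff : forall N m o', (Nm m <= N)%N -> realizes K o' (shiftZ u m) -> tor_equiv K o o'.
  by move=> H; apply: (H (Nm m)).
elim=> [|N IH] {}m {}o' HN Ho'.
- case: (comb_step sK Ho Ho') => [E|[m' [o'' [HN' _]]]].
  + by apply: rst_step; left.
  + by move: HN; rewrite -HN' addn1.
- case: (comb_step sK Ho Ho') => [E|[m' [o'' [HN' [Hr Hi]]]]].
  + by apply: rst_step; left.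
  + apply: Hi; apply: (IH m') => //; by move: HN; rewrite -HN' addn1.
Qed.

End D.

Section E.
Local Open Scope R_scope.

Definition fl (r : R) : Z := (up r - 1)%Z.
Definition fracR (r : R) : R := r - IZR (fl r).

Lemma frac_bounds r : 0 <= fracR r < 1.
Proof. rewrite /fracR /fl minus_IZR; have := archimed r; lra. Qed.

Lemma int_small d (z : Z) : -1 < d < 1 -> d = IZR z -> d = 0.
Proof.
move=> [h1 h2] E; subst.
have : (-1 < z)%Z by apply: lt_IZR.
have : (z < 1)%Z by apply: lt_IZR.
by move=> a b; have -> : z = 0%Z by lia.
Qed.

Lemma seg d0 d1 : -1 < d1 < 1 -> d1 <> 0 ->
  (forall t, 0 <= t <= 1 -> forall z : Z, (1 - t) * d0 + t * d1 <> IZR z) ->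
  -1 < d0 < 1 /\ (0 < d0 <-> 0 < d1).
Proof.
move=> hd1 nz H.
have key : forall p (z : Z), (0 <= p <= d0 - d1 \/ d0 - d1 <= p <= 0) -> d0 - d1 <> 0 -> d0 - p = IZR z -> False.
  move=> p z hp hq hz.
  pose t := p / (d0 - d1).
  have ht : t * (d0 - d1) = p by rewrite /t; field.
  have : 0 <= t <= 1 by case: hp => hp; split; nra.
  move=> /H /(_ z); apply.
  by rewrite -hz -ht; ring.
case: (Rlt_le_dec 0 d1) => h1.
- have L1 : d0 < 1.
    apply: Rnot_le_lt => h; apply: (key (d0 - 1) 1%Z); [left; lra|lra|simpl; lra].
  have L2 : 0 < d0.
    apply: Rnot_le_lt => h; apply: (key d0 0%Z); [right; lra|lra|simpl; lra].
  split; lra.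
- have h1' : d1 < 0 by lra.
  have L1 : -1 < d0.
    apply: Rnot_le_lt => h; apply: (key (d0 + 1) (-1)%Z); [right; lra|lra|simpl; lra].
  have L2 : d0 < 0.
    apply: Rnot_le_lt => h; apply: (key d0 0%Z); [left; lra|lra|simpl; lra].
  split; lra.
Qed.

Lemma cyc3 yi yk yj (mi mk mj : Z) : 0 <= yi < 1 -> 0 <= yk < 1 -> 0 <= yj < 1 ->
  yi + IZR mi < yk + IZR mk -> yk + IZR mk < yj + IZR mj -> yj + IZR mj < yi + IZR mi + 1 ->
  (yi < yk /\ yk < yj) \/ (yk < yj /\ yj < yi) \/ (yj < yi /\ yi < yk).
Proof.
move=> hi hk hj h1 h2 h3.
have Ep : IZR (mk - mi) = IZR mk - IZR mi by rewrite minus_IZR.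
have Eq : IZR (mj - mi) = IZR mj - IZR mi by rewrite minus_IZR.
have p1 : (-1 < mk - mi)%Z by apply: lt_IZR; rewrite Ep; lra.
have p2 : (mk - mi < 2)%Z by apply: lt_IZR; rewrite Ep; lra.
have q1 : (-1 < mj - mi)%Z by apply: lt_IZR; rewrite Eq; lra.
have q2 : (mj - mi < 2)%Z by apply: lt_IZR; rewrite Eq; lra.
have HP : (mk - mi = 0 \/ mk - mi = 1)%Z by lia.
have HQ : (mj - mi = 0 \/ mj - mi = 1)%Z by lia.
case: HP => P; case: HQ => Q; move: Ep Eq; rewrite P Q /= => Ep Eq; lra.
Qed.

End E.

Section F.
Variable n : nat.
Implicit Types (K o G w : vrel n) (u x y : point n).
Local Open Scope R_scope.

Lemma hyp_sym (a b : 'I_n) x : tor_hyp a b x -> tor_hyp b a x.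
Proof. move=> [z hz]; exists (- z)%Z; rewrite opp_IZR -hz; ring. Qed.

Lemma closure_simple G w : simple_graph G -> simple_graph (tor_closure G w).
Proof.
move=> [Gs Gl]; split.
- move=> a b [h|[ne h]]; [left; exact: Gs|right; split; first by move=> e; apply: ne].
  by move=> x /h hx /hyp_sym.
- by move=> a [/Gl|[]].
Qed.

Lemma eq_hyp (a b : 'I_n) x : x a = x b -> tor_hyp a b x.
Proof. by move=> e; exists 0%Z; rewrite e /=; ring. Qed.

Lemma chamber_neq G w x a b : chamber G w x -> tor_closure G w a b -> x a <> x b.
Proof.
move=> hc [h|[_ h]] e.
- by case: hc => _ [/(_ _ _ h) + _]; apply; apply: eq_hyp.
- by apply: (h x hc); apply: eq_hyp.
Qed.

Lemma fund_realizes K x : in_fund x -> (forall a b, K a b -> x a <> x b) ->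
  realizes K (pt_orient K x) x.
Proof.
move=> hf hn; split => [a b Kab|//].
have := hf a; have := hf b; have := hn a b Kab; split=> //; lra.
Qed.

Lemma fund_nohyp x (a b : 'I_n) : in_fund x -> x a <> x b -> ~ tor_hyp a b x.
Proof.
move=> hf ne [z hz]; apply: ne.
have := int_small (d := x a - x b) (z := z).
have := hf a; have := hf b => h1 h2 h3; have := h3 ltac:(lra) hz; lra.
Qed.

Lemma realizes_c K o u c : realizes K o u -> realizes K o (fun v => u v + c).
Proof.
move=> [h1 h2]; split.
- move=> a b /h1 [? ?]; split; [lra|move=> ?; lra].
- move=> a b; rewrite h2; split=> [[? ?]|[? ?]]; split=> //; lra.
Qed.

Lemma chamber_of G w x y : simple_graph G -> chamber G w x -> in_fund y ->
  (forall a b, G a b -> y a <> y b) ->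
  (exists m, realizes G (pt_orient G x) (shiftZ y m)) -> chamber G w y.
Proof.
move=> sG hx hf hn [m hm]; split=> //; split.
  by move=> a b /hn; apply: fund_nohyp.
have := comb sG (fund_realizes hf hn) hm => e.
apply: rst_trans e _; exact: hx.2.2.
Qed.

Lemma frac_shift_int r : r = fracR r + IZR (fl r).
Proof. rewrite /fracR; ring. Qed.

Lemma frac_neq (r s : R) : -1 < r - s < 1 -> r <> s -> fracR r <> fracR s.
Proof.
move=> h ne e; apply: ne.
have : r - s = IZR (fl r - fl s).
  by rewrite minus_IZR {1}(frac_shift_int r) {1}(frac_shift_int s) e; ring.
move/(int_small h) => ?; lra.
Qed.

Lemma frac_neq_int (r s : R) : (forall z : Z, r - s <> IZR z) -> fracR r <> fracR s.
Proof.
move=> h e; apply: (h (fl r - fl s)%Z).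
by rewrite minus_IZR {1}(frac_shift_int r) {1}(frac_shift_int s) e; ring.
Qed.

Lemma chamber_shift G w x c : simple_graph G -> chamber G w x ->
  chamber G w (fun v => fracR (x v + c)).
Proof.
move=> sG hx; apply: (chamber_of sG hx).
- by move=> v; apply: frac_bounds.
- move=> a b Gab; apply: frac_neq_int => z hz.
  apply: (hx.2.1 a b Gab); exists z; rewrite -hz; ring.
- exists (fun v => fl (x v + c)).
  have hr : realizes G (pt_orient G x) x.
    apply: fund_realizes; first exact: hx.1.
    by move=> a b Gab; apply: (chamber_neq hx); left.
  have := realizes_c c hr; apply: realizes_ext => // v.
  by rewrite /shiftZ /fracR; ring.
Qed.

Lemma convex_in a b d0 d1 t : a < d0 < b -> a < d1 < b -> 0 <= t <= 1 ->
  a < (1 - t) * d0 + t * d1 < b.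
Proof.
move=> h0 h1 ht.
have -> : (1 - t) * d0 + t * d1 = d0 + t * (d1 - d0) by ring.
case: (Rle_lt_dec d0 d1) => h.
- have e1 : 0 <= t * (d1 - d0) by apply: Rmult_le_pos; lra.
  have e2 : 0 <= (1 - t) * (d1 - d0) by apply: Rmult_le_pos; lra.
  lra.
- have e1 : 0 <= t * (d0 - d1) by apply: Rmult_le_pos; lra.
  have e2 : 0 <= (1 - t) * (d0 - d1) by apply: Rmult_le_pos; lra.
  lra.
Qed.

Lemma conv d0 d1 t : -1 < d0 < 1 -> d0 <> 0 -> -1 < d1 < 1 -> d1 <> 0 ->
  (0 < d0 <-> 0 < d1) -> 0 <= t <= 1 ->
  -1 < (1 - t) * d0 + t * d1 < 1 /\ (1 - t) * d0 + t * d1 <> 0 /\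
  (0 < (1 - t) * d0 + t * d1 <-> 0 < d1).
Proof.
move=> h0 n0 h1 n1 hs ht.
have := convex_in h0 h1 ht => hc.
case: (Rlt_le_dec 0 d1) => s1.
- have s0 : 0 < d0 by apply: (proj2 hs).
  have := @convex_in 0 1 d0 d1 t ltac:(lra) ltac:(lra) ht => hc'.
  split=> //; split; [move=> ?; lra|split=> _; lra].
- have s1' : d1 < 0 by lra.
  have s0 : d0 < 0 by case: (Rlt_le_dec 0 d0) => h; [have := proj1 hs h; lra|lra].
  have := @convex_in (-1) 0 d0 d1 t ltac:(lra) ltac:(lra) ht => hc'.
  split=> //; split; [move=> ?; lra|split=> ?; lra].
Qed.

End F.

Section T.
Variable n : nat.
Implicit Types (K o G w : vrel n) (u x y : point n).
Local Open Scope R_scope.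

Lemma frac_eq_int (r s : R) (z : Z) : r - s = IZR z -> fracR r = fracR s.
Proof.
move=> h.
have e : fracR r - fracR s = IZR (z - fl r + fl s).
  rewrite /fracR /fl plus_IZR !minus_IZR -h; ring.
have := frac_bounds r; have := frac_bounds s => h1 h2.
have := int_small (d := fracR r - fracR s) ltac:(lra) e; lra.
Qed.

Lemma transfer G w x y : simple_graph G -> chamber G w x -> chamber G w y ->
  tor_equiv (tor_closure G w) (pt_orient (tor_closure G w) x) (pt_orient (tor_closure G w) y).
Proof.
move=> sG hx hy.
set H := tor_closure G w.
have sH : simple_graph H := closure_simple w sG.
have rGx : realizes G (pt_orient G x) x.
  apply: fund_realizes; first exact: hx.1.
  by move=> a b Gab; apply: (chamber_neq hx); left.
have rGy : realizes G (pt_orient G y) y.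
  apply: fund_realizes; first exact: hy.1.
  by move=> a b Gab; apply: (chamber_neq hy); left.
have eGxy : tor_equiv G (pt_orient G x) (pt_orient G y).
  apply: rst_trans; first exact: hx.2.2.
  by apply: rst_sym; exact: hy.2.2.
have [m hm] := proj1 (chain sG eGxy x) rGx.
set X := shiftZ x m in hm *.
have sgnG : forall p q, G p q -> (0 < X p - X q <-> 0 < y p - y q).
  move=> p q Gpq; have Gqp : G q p by case: sG => Gs _; exact: Gs.
  have e2 := proj2 hm q p; split=> h.
  - have : pt_orient G y q p by apply/e2; split=> //; lra.
    case=> _ ?; lra.
  - have : G q p /\ X q < X p by apply/e2; split=> //; lra.
    case=> _ ?; lra.
have key : forall a b, H a b -> forall t, 0 <= t <= 1 -> forall z : Z,
    (1 - t) * (X a - X b) + t * (y a - y b) <> IZR z.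
  move=> a b Hab t ht z hz.
  pose zt := fun v => (1 - t) * X v + t * y v.
  pose fz := fun v => fracR (zt v).
  have ezt : forall p q, zt p - zt q = (1 - t) * (X p - X q) + t * (y p - y q).
    by move=> p q; rewrite /zt; ring.
  have rz : realizes G (pt_orient G y) zt.
    have cv : forall p q, G p q -> -1 < zt p - zt q < 1 /\ zt p - zt q <> 0 /\
                 (0 < zt p - zt q <-> 0 < y p - y q).
      move=> p q Gpq; rewrite ezt.
      have [dX nX] := proj1 hm p q Gpq.
      have [dY nY] := proj1 rGy p q Gpq.
      apply: conv => //; try (move=> ?; lra).
      exact: sgnG.
    split.
    - move=> p q /cv [? [? _]]; split=> //; move=> ?; lra.
    - move=> p q; rewrite /pt_orient; split=> [[Gpq h]|[Gpq h]]; split=> //.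
      + have Gqp : G q p by case: sG => Gs _; exact: Gs.
        have [_ [_ e]] := cv q p Gqp.
        have : 0 < zt q - zt p by apply/e; lra.
        lra.
      + have Gqp : G q p by case: sG => Gs _; exact: Gs.
        have [_ [_ e]] := cv q p Gqp.
        have : 0 < y q - y p by apply/e; lra.
        lra.
  have cz : chamber G w fz.
    apply: (chamber_of sG hy).
    - by move=> v; apply: frac_bounds.
    - move=> p q Gpq; have [h1 h2] := proj1 rz p q Gpq; exact: frac_neq h1 h2.
    - exists (fun v => fl (zt v)); apply: realizes_ext rz => // v.
      by rewrite /shiftZ /fz /fracR; ring.
  apply: (chamber_neq cz Hab); apply: (frac_eq_int (z := z)).
  by rewrite ezt.
have dyH : forall a b, H a b -> -1 < y a - y b < 1 /\ y a - y b <> 0.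
  move=> a b Hab; have := chamber_neq hy Hab; have := hy.1 a; have := hy.1 b.
  move=> ? ? ?; split; [lra|move=> ?; lra].
have sgnH : forall a b, H a b -> -1 < X a - X b < 1 /\ (0 < X a - X b <-> 0 < y a - y b).
  move=> a b Hab; have [d1 d2] := dyH a b Hab; exact: seg d1 d2 (key a b Hab).
have rX : realizes H (pt_orient H y) X.
  split.
  - move=> a b Hab; have Hba : H b a by case: sH => Hs _; exact: Hs.
    have [h1 h2] := sgnH a b Hab; have [h3 h4] := sgnH b a Hba.
    have [_ nz] := dyH a b Hab.
    split=> // e.
    case: (Rlt_le_dec 0 (y a - y b)) => s.
    + have := proj2 h2 s; lra.
    + have : 0 < y b - y a by lra.
      move/(proj2 h4); lra.
  - move=> p q; rewrite /pt_orient; split=> [[Hpq h]|[Hpq h]]; split=> //.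
    + have Hqp : H q p by case: sH => Hs _; exact: Hs.
      have [_ e] := sgnH q p Hqp.
      have : 0 < X q - X p by apply/e; lra.
      lra.
    + have Hqp : H q p by case: sH => Hs _; exact: Hs.
      have [_ e] := sgnH q p Hqp.
      have : 0 < y q - y p by apply/e; lra.
      lra.
apply: (comb sH _ rX).
apply: fund_realizes; first exact: hx.1.
by move=> a b Hab; apply: (chamber_neq hx).
Qed.

End T.

Section P.
Variable n : nat.
Implicit Types (K o G w : vrel n) (u x y : point n).
Local Open Scope R_scope.

Lemma path_last K o u b q : realizes K o u -> dpath o b q ->
  b = last b q \/ u b < u (last b q).
Proof.
move=> ro; elim: q b => [|c q IH] b /=; first by left.
move=> [obc dq]; right.
have h := proj2 (proj1 (proj2 ro b c) obc).
by case: (IH c dq) => [<-|?]; lra.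
Qed.

Lemma path_incr K o u a q : realizes K o u -> dpath o a q ->
  forall k, k \in q -> u a < u k /\ (k = last a q \/ u k < u (last a q)).
Proof.
move=> ro; elim: q a => [|b q IH] a //= [oab dq] k.
have hab := proj2 (proj1 (proj2 ro a b) oab).
rewrite inE => /orP [/eqP->|kq].
- by split=> //; apply: (path_last ro dq).
- have [h1 h2] := IH b dq k kq; split=> //; lra.
Qed.

Definition pb w (u v : 'I_n) : bool :=
  if excluded_middle_informative (clos_trans _ w u v) then true else false.

Lemma pbP w (s t : 'I_n) : pb w s t <-> clos_trans _ w s t.
Proof. by rewrite /pb; case: excluded_middle_informative. Qed.

Definition cnt w (v : 'I_n) : nat := #|[pred t | pb w t v]|.

Lemma cnt_lt w a b : acyclic w -> w a b -> (cnt w a < cnt w b)%N.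
Proof.
move=> ac wab; apply: proper_card; apply/properP; split.
- apply/subsetP => t; rewrite !inE => /pbP h; apply/pbP.
  exact: t_trans h (t_step _ _ _ _ wab).
- exists a; rewrite inE; first by apply/pbP; apply: t_step.
  by apply/negP => /pbP /ac.
Qed.

Lemma cnt_le w v : (cnt w v <= n)%N.
Proof. by rewrite /cnt; have := max_card [pred t | pb w t v]; rewrite card_ord. Qed.

Definition cpt w : point n := fun v => INR (cnt w v) / (INR n + 1).

Lemma cpt_lt w a b : acyclic w -> w a b -> cpt w a < cpt w b.
Proof.
move=> ac wab; rewrite /cpt /Rdiv; apply: Rmult_lt_compat_r.
  by apply: Rinv_0_lt_compat; have := pos_INR n; lra.
by apply: lt_INR; apply/ltP; exact: cnt_lt.
Qed.

Lemma cpt_fund w : in_fund (cpt w).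
Proof.
move=> v; have hN : 0 < INR n + 1 by have := pos_INR n; lra.
have hc : INR (cnt w v) <= INR n by apply: le_INR; apply/leP; exact: cnt_le.
have h0 := pos_INR (cnt w v).
rewrite /cpt; split.
- apply: Rmult_le_pos => //; apply: Rlt_le; exact: Rinv_0_lt_compat.
- apply: (Rmult_lt_reg_r (INR n + 1)) => //.
  rewrite /Rdiv Rmult_assoc Rinv_l; lra.
Qed.

Lemma exists_chamber G w : simple_graph G -> is_acyc G w -> exists x, chamber G w x.
Proof.
move=> sG [[o1 [o2 o3]] ac]; exists (cpt w).
have hf := cpt_fund w.
have ne : forall a b, G a b -> cpt w a <> cpt w b.
  move=> a b /o2 [h|h] e; [have := cpt_lt ac h|have := cpt_lt ac h]; lra.
split=> //; split.
  by move=> a b /ne; apply: fund_nohyp.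
apply: rst_step; left => a b; rewrite /pt_orient; split.
- move=> [Gab lt]; case: (o2 _ _ Gab) => // h; have := cpt_lt ac h; lra.
- by move=> h; split; [exact: o1|exact: cpt_lt].
Qed.

Lemma pt_acyclic K x : acyclic (pt_orient K x).
Proof.
move=> a h.
have : forall p q, clos_trans _ (pt_orient K x) p q -> x p < x q.
  move=> p q; elim=> [? ? [_ ?]|? ? ? _ ? _ ?] //; lra.
by move/(_ a a h); lra.
Qed.

Lemma class_of_pt G w y : simple_graph G -> chamber G w y ->
  in_closure_class G w (pt_orient (tor_closure G w) y).
Proof.
move=> sG hy; set H := tor_closure G w.
have ne : forall a b, H a b -> y a <> y b by move=> a b; apply: chamber_neq.
have sH : simple_graph H := closure_simple w sG.
split.
- split; last exact: pt_acyclic.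
  split; first by move=> a b [].
  split.
  + move=> a b Hab; have := ne a b Hab; case: (Rlt_le_dec (y a) (y b)) => h e.
    * by left.
    * right; split; [by case: sH => Hs _; apply: Hs|lra].
  + by move=> a b [_ h] [_ h']; lra.
- exists y; split=> //; split; first exact: hy.1.
  split; first by move=> a b /ne; apply: fund_nohyp; exact: hy.1.
  exact: rst_refl.
Qed.

End P.

Section M.
Local Open Scope R_scope.

Lemma rot3 n (z : point n) a b c : (exists r, (r < 3)%N /\ incr_along z (rot r [:: a; b; c])) ->
  (z a < z b /\ z b < z c) \/ (z b < z c /\ z c < z a) \/ (z c < z a /\ z a < z b).
Proof.
move=> [[|[|[|r]]] [hr h]] //=; move: h => /=.
- by move=> [? [? _]]; left.
- by move=> [? [? _]]; right; left.
- by move=> [? [? _]]; right; right.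
Qed.

Lemma rot3_intro n (z : point n) a b c :
  (z a < z b /\ z b < z c) \/ (z b < z c /\ z c < z a) \/ (z c < z a /\ z a < z b) ->
  exists r, (r < 3)%N /\ incr_along z (rot r [:: a; b; c]).
Proof.
case=> [[? ?]|[[? ?]|[? ?]]]; [exists 0%N|exists 1%N|exists 2%N]; by split.
Qed.

Lemma perm2 (T : eqType) (s : seq T) i j : perm_eq s [:: i; j] -> i <> j ->
  s = [:: i; j] \/ s = [:: j; i].
Proof.
move=> ps nij; have := perm_size ps; case: s ps => [|a [|b [|c s]]] // ps _.
have ma : a \in [:: i; j] by rewrite -(perm_mem ps) inE eqxx.
have mb : b \in [:: i; j] by rewrite -(perm_mem ps) !inE eqxx orbT.
have mi : i \in [:: a; b] by rewrite (perm_mem ps) inE eqxx.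
have mj : j \in [:: a; b] by rewrite (perm_mem ps) !inE eqxx orbT.
move: ma mb mi mj; rewrite !inE.
case/orP=> /eqP -> ; case/orP=> /eqP -> ; [| by left| by right|];
  rewrite !orbb => /eqP e1 /eqP e2; exfalso; apply: nij; congruence.
Qed.

Lemma chain2 n (G w : vrel n) s i j z : perm_eq s [:: i; j] -> i <> j -> cyc_chain G w s ->
  chamber G w z -> z i <> z j.
Proof.
move=> ps nij cs hz; have [r [hr h]] := cs z hz.
case: (perm2 ps nij) => E; subst s; move: hr h; case: r => [|[|r]] //= _; lra.
Qed.

Lemma frac0 : fracR 0 = 0.
Proof.
have := frac_bounds 0 => hb.
have e : fracR 0 = IZR (- fl 0) by rewrite opp_IZR /fracR; ring.
apply: (int_small (z := (- fl 0)%Z)) => //; lra.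
Qed.

End M.
Unset Implicit Arguments.

Theorem mainTheorem6 (n : nat) (G w : vrel n)
  (hG : simple_graph G) (hw : is_acyc G w) (i j k : 'I_n) :
  in_tor_interval G w i j k <->
  exists w' : vrel n, in_closure_class G w w' /\
    exists p : seq 'I_n, tor_dpath w' i j p /\ k \in p.
Proof.
set H := tor_closure G w.
have sH : simple_graph H := closure_simple w hG.
have [x0 hx0] := exists_chamber hG hw.
split.
- rewrite /in_tor_interval; case: eqP => [eij|nij].
  + move=> ->; subst j; exists (pt_orient H x0); split; first exact: class_of_pt.
    exists [:: i]; split; last by rewrite inE.
    by rewrite /tor_dpath /=.
  + move=> [[s [ps cs]] hk].
    pose y := fun v => fracR (x0 v + - x0 i).
    have hy : chamber G w y := chamber_shift (- x0 i) hG hx0.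
    have yi0 : y i = 0 by rewrite /y Rplus_opp_r frac0.
    have Hij : H i j.
      right; split=> // z hz; apply: fund_nohyp; first exact: hz.1.
      exact: chain2 ps nij cs hz.
    have yij : (y i < y j)%R.
      have := chamber_neq hy Hij; have := hy.1 j; rewrite yi0 => ? ?; lra.
    exists (pt_orient H y); split; first exact: class_of_pt.
    have wij : pt_orient H y i j by split.
    case: hk => [->|[->|cc]].
    * exists [:: i; j]; split; last by rewrite inE eqxx.
      by rewrite /tor_dpath /=.
    * exists [:: i; j]; split; last by rewrite !inE eqxx orbT.
      by rewrite /tor_dpath /=.
    * have dist : forall z, chamber G w z -> z i <> z k /\ z k <> z j.
        move=> z hz; have := rot3 (cc z hz); lra.
      have [dik dkj] := dist y hy.
      have Hik : H i k.
        right; split=> [e|z hz]; first by apply: dik; rewrite e.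
        apply: fund_nohyp; first exact: hz.1.
        exact: (dist z hz).1.
      have Hkj : H k j.
        right; split=> [e|z hz]; first by apply: dkj; rewrite e.
        apply: fund_nohyp; first exact: hz.1.
        exact: (dist z hz).2.
      have [yik ykj] : (y i < y k /\ y k < y j)%R.
        have := rot3 (cc y hy); have := hy.1 k; have := hy.1 j; rewrite yi0; lra.
      exists [:: i; k; j]; split; last by rewrite !inE eqxx orbT.
      by rewrite /tor_dpath /=.
- move=> [w' [[acw' [x [hx hx']]] [p [hp hk]]]].
  case: p hp hk => [//|a q] /= [-> [hl [hd hq]]] hk.
  case: (eqVneq q [::]) => [qe|qne].
    subst q; move: hl hk => /= <-; rewrite /in_tor_interval eqxx inE.
    by move/eqP.
  have wij := hq (elimN eqP qne).
  have Hij : H i j := proj1 acw'.1 i j wij.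
  have nij : i != j by apply/eqP => e; move: Hij; rewrite -e; case: sH => _; apply.
  rewrite /in_tor_interval (negbTE nij); split.
    exists [:: i; j]; split; first exact: perm_refl.
    move=> z hz; have := chamber_neq hz Hij => ne.
    case: (Rlt_le_dec (z i) (z j)) => h; [exists 0%N|exists 1%N]; split=> //=; lra.
  move: hk; rewrite inE => /orP [/eqP->|kq]; first by left.
  case: (eqVneq k j) => [->|nkj]; first by right; left.
  right; right => y hy.
  have e : tor_equiv H (pt_orient H y) w'.
    apply: rst_trans; first exact: (rst_sym _ _ _ _ (transfer hG hx hy)).
    exact: hx'.2.2.
  have ry : realizes H (pt_orient H y) y.
    apply: fund_realizes; first exact: hy.1.
    by move=> a1 b1; apply: chamber_neq.
  have [m hm] := proj1 (chain sH e y) ry.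
  have [h1 h2] := path_incr hm hd kq; rewrite hl in h2.
  have h3 : (shiftZ y m k < shiftZ y m j)%R by case: h2 => // e'; move/eqP: nkj.
  have h4 := realizes_diff hm Hij.
  apply: rot3_intro; move: h1 h3 h4; rewrite /shiftZ => h1 h3 h4.
  apply: (cyc3 (hy.1 i) (hy.1 k) (hy.1 j) h1 h3); lra.
Qed.
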